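(* Let $f:(0,\infty)\to[1,\infty)$ be nondecreasing and ${\bf C}_0:(0,\infty)\to(0,\infty)$ be monotonically increasing. For an integer $p\ge2$ and $\xi>0$ define $$ {\bf C}(p,\xi)=\frac{{\bf C}_0(\xi)}{2\left[1-(1-p^{-f(\xi)})^{e^{\xi}}\right](1-p^{-f(\xi)})^{e^{\xi}}},\qquad {\bf C}(p)=\min_{\xi>0}{\bf C}(p,\xi), $$ and assume that for all sufficiently large $p$ there is $\xi_0=\xi_0(p)>0$ solving $\xi_0=\log\left[-\frac{\log 2}{\log(1-p^{-f(\xi_0)})}\right]$. Then: (1) if $\lim_{\xi\to\infty}\frac{f(\xi)\log{\bf C}_0(\xi)}{\xi}=0$, then ${\bf C}(p)$ is subexponential or polynomial in $\log p$, i.e. $\lim_{p\to\infty}\frac{\log{\bf C}(p)}{\log p}=0$; (2) in particular, if ${\bf C}_0(\xi)$ is polynomially bounded in $\xi$ and $f(\xi)$ scales sublinearly (i.e. $f(\xi)\le K\xi^{\beta}$ for some constants $K>0$ and $0\le\beta<1$), then ${\bf C}(p)$ is bounded by a polynomial in $\log p$.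
   Context: All logarithms are natural. ''${\bf C}_0$ polynomially bounded'' means ${\bf C}_0(\xi)\le K'\xi^{a}$ for some constants $K',a>0$ and all large $\xi$. *)

(* Defs.v *)
From HB Require Import structures.
From mathcomp Require Import all_boot all_order all_algebra.
From mathcomp Require Import all_classical all_reals all_analysis.
Set Implicit Arguments. Unset Strict Implicit. Unset Printing Implicit Defensive.
Import Order.TTheory GRing.Theory Num.Theory.
Import numFieldNormedType.Exports.
Local Open Scope ring_scope.

Definition qpf {R : realType} (f : R -> R) (p : nat) (xi : R) : R :=
  (p%:R) `^ (- f xi).

Definition Cpxi {R : realType} (C0 f : R -> R) (p : nat) (xi : R) : R :=
  C0 xi / (2 * ((1 - (1 - qpf f p xi) `^ expR xi) * (1 - qpf f p xi) `^ expR xi)).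

Definition is_Cmin {R : realType} (C0 f : R -> R) (p : nat) (m : R) : Prop :=
  (exists2 xi, 0 < xi & m = Cpxi C0 f p xi) /\
  (forall xi, 0 < xi -> m <= Cpxi C0 f p xi).

(* Main.v *)
Require Import Defs.
From HB Require Import structures.
From mathcomp Require Import all_boot all_order all_algebra.
From mathcomp Require Import all_classical all_reals all_analysis.
From mathcomp Require Import ring lra.
Import Order.TTheory GRing.Theory Num.Theory.
Import numFieldNormedType.Exports.
Local Open Scope classical_set_scope.
Local Open Scope ring_scope.

Section H.
Context {R : realType}.

Lemma powRE (a x : R) : 0 < a -> a `^ x = expR (x * ln a).
Proof. by move=> a0; rewrite /powR gt_eqF. Qed.

Lemma ln2_gt0 : 0 < ln (2:R).
Proof. by apply: ln_gt0; rewrite ltr1n. Qed.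

Lemma ln2_le1 : ln (2:R) <= 1.
Proof.
have h : (2:R) <= expR 1 by have := expR_ge1Dx (1:R).
by rewrite -[X in _ <= X](expRK 1) ler_ln // posrE ?expR_gt0 ?ltr0n.
Qed.

Lemma ln1B (q : R) : 0 < q <= 1/2 -> -(2*q) <= ln(1-q) <= -q.
Proof.
case/andP=> q0 q2.
have q1 : 0 < 1 - q by rewrite subr_gt0 (le_lt_trans q2) // ltr_pdivrMr // mul1r ltr1n.
apply/andP; split; last first.
  by apply: le_ln1Dx; rewrite ltrN2 (le_lt_trans q2) // ltr_pdivrMr // mul1r ltr1n.
have -> : 1 - q = (1 + q / (1 - q))^-1.
  have h1 : 1 + q / (1 - q) = (1 - q)^-1 by field; rewrite lt0r_neq0.
  by rewrite h1 invrK.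
rewrite lnV; last by rewrite posrE addr_gt0 ?divr_gt0.
rewrite lerN2 (le_trans (le_ln1Dx _)) //.
  by rewrite (lt_le_trans (_ : -1 < 0)) // ?divr_ge0 ?ltW // ltrN10.
rewrite ler_pdivrMr //; nra.
Qed.

Lemma qpfE (f : R -> R) p xi : (2 <= p)%N -> qpf f p xi = expR (- (f xi * ln p%:R)).
Proof. by move=> p2; rewrite /qpf powRE ?mulNr // ltr0n (leq_trans _ p2). Qed.

Lemma lnp_gt0 p : (2 <= p)%N -> 0 < ln (p%:R : R).
Proof. by move=> p2; apply: ln_gt0; rewrite ltr1n. Qed.

Lemma expR_lnp p : (2 <= p)%N -> expR (ln (p%:R : R)) = p%:R.
Proof. by move=> p2; rewrite lnK // posrE ltr0n (leq_trans _ p2). Qed.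

Lemma qpf_bd (f : R -> R) p xi : (2 <= p)%N -> 1 <= f xi -> 0 < qpf f p xi <= 1/2.
Proof.
move=> p2 f1; rewrite qpfE // expR_gt0 /=.
have L0 := lnp_gt0 _ p2.
apply: (le_trans (_ : _ <= expR (- ln (p%:R : R)))).
  by rewrite ler_expR lerN2 ler_peMl // ltW.
rewrite expRN expR_lnp // div1r lef_pV2 ?posrE ?ltr0n ?(leq_trans _ p2) //.
by rewrite ler_nat.
Qed.

Lemma tE (q x : R) : 0 < q <= 1/2 -> (1 - q) `^ x = expR (x * ln (1 - q)).
Proof.
case/andP=> q0 q2; rewrite powRE // subr_gt0 (le_lt_trans q2) //.
by rewrite ltr_pdivrMr // mul1r ltr1n.
Qed.

Lemma t_bd (q x : R) : 0 < q <= 1/2 -> 0 < x -> 0 < (1 - q) `^ x < 1.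
Proof.
move=> hq x0; rewrite tE // expR_gt0 expR_lt1 /=.
have := ln1B _ hq; case/andP: hq => q0 _ /andP[_ h].
by rewrite pmulr_rlt0 // (le_lt_trans h) // oppr_lt0.
Qed.

Lemma Cge (C0 f : R -> R) p xi : (2 <= p)%N -> 1 <= f xi -> 0 < C0 xi ->
  2 * C0 xi <= Cpxi C0 f p xi.
Proof.
move=> p2 f1 c0; rewrite /Cpxi.
have := t_bd _ _ (qpf_bd _ _ _ p2 f1) (expR_gt0 xi).
set t := (_ `^ _) => /andP[t0 t1].
have d0 : 0 < 2 * ((1 - t) * t) by rewrite mulr_gt0 // mulr_gt0 // subr_gt0.
have d2 : 2 * ((1 - t) * t) <= 1/2.
  have := sqr_ge0 (2 * t - 1); rewrite expr2; lra.
rewrite ler_pdivlMr //.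
have := ler_wpM2l (ltW c0) d2; lra.
Qed.

Lemma Cxi0 (C0 f : R -> R) p xi : (2 <= p)%N -> 1 <= f xi ->
  xi = ln (- ln 2 / ln (1 - qpf f p xi)) ->
  [/\ Cpxi C0 f p xi = 2 * C0 xi, xi <= f xi * ln p%:R &
      ln 2 / 2 * p%:R <= expR xi].
Proof.
move=> p2 f1 hxi.
have hq := qpf_bd _ _ _ p2 f1.
have := ln1B _ hq; rewrite qpfE // in hq hxi *.
set q := expR _ in hq hxi *; set y := ln (1 - q) in hxi * => /andP[y1 y2].
case/andP: hq => q0 q2.
have l2 := ln2_gt0; have l21 := ln2_le1.
have yn : y < 0 by rewrite (le_lt_trans y2) // oppr_lt0.
have ey : expR xi = - ln 2 / y.
  rewrite {1}hxi lnK //; by rewrite posrE -mulrNN -invrN opprK divr_gt0 // oppr_gt0.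
have ey' : expR xi = ln 2 / (- y) by rewrite ey -mulrNN -invrN opprK.
have L0 := lnp_gt0 _ p2.
have F1 : 0 < f xi by rewrite (lt_le_trans ltr01).
split.
- rewrite /Cpxi /qpf -/(qpf f p xi) qpfE // -/q tE ?q0 ?q2 // -/y ey.
  have -> : - ln 2 / y * y = - ln (2:R) by field; rewrite lt_eqF.
  by rewrite expRN lnK ?posrE //; field.
- have h : expR xi <= expR (f xi * ln p%:R).
    rewrite ey'.
    have -> : expR (f xi * ln p%:R) = q^-1 by rewrite /q expRN invrK.
    rewrite ler_pdivrMr ?oppr_gt0 //.
    have : 1 <= q^-1 * - y.
      have h : q^-1 * q <= q^-1 * - y by apply: ler_wpM2l; [rewrite invr_ge0 ltW | lra].
      by rewrite mulVf ?lt0r_neq0 in h.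
    lra.
  by rewrite ler_expR in h.
- rewrite ey'.
  have : expR (ln (p%:R:R)) <= expR (f xi * ln p%:R) by rewrite ler_expR ler_peMl // ltW.
  rewrite expR_lnp // => hE.
  have qE : q * expR (f xi * ln p%:R) = 1 by rewrite /q expRN mulVf // gt_eqF // expR_gt0.
  have p0 : (0:R) <= p%:R by [].
  have pq : p%:R * q <= q * expR (f xi * ln p%:R) by nra.
  rewrite qE in pq.

  have yy : 0 < - y by rewrite oppr_gt0.
  have py : p%:R * (- y) <= 2 by nra.
  rewrite ler_pdivlMr //.
  have -> : ln 2 / 2 * p%:R * - y = ln 2 / 2 * (p%:R * - y) by rewrite mulrA.
  nra.
Qed.

Lemma aux1 (e q y : R) : 0 <= e -> -(2*q) <= y -> 2*q <= 1 -> - e <= e * y.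
Proof. move=> e0 h1 h2; nra. Qed.

Lemma aux2 (e y c : R): 1 <= e -> y <= 0 -> y <= c -> e*y <= c.
Proof. move=> *; nra. Qed.

Lemma aux3 (q : R) : q <= 1/2 -> 2*q <= 1.
Proof. move=> *; lra. Qed.

Lemma aux4 (A B D m : R) : 0 < m -> m <= D -> 0 <= B -> A <= B / D -> m * A <= B.
Proof.
move=> m0 mD B0; rewrite ler_pdivlMr; last exact: lt_le_trans mD.
move=> h; nra.
Qed.

Lemma C0_lb (f C0 : R -> R) (Cmin : nat -> R)
  (f_ge1 : forall xi, 0 < xi -> 1 <= f xi)
  (f_mono : forall x y, 0 < x -> x <= y -> f x <= f y)
  (C0_pos : forall xi, 0 < xi -> 0 < C0 xi)
  (C0_mono : forall x y, 0 < x -> x <= y -> C0 x <= C0 y)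
  (Cm : is_Cmin C0 f 2 (Cmin 2)) :
  exists2 c, 0 < c & forall xi, 0 < xi -> c <= C0 xi.
Proof.
case: Cm => [[xs xs0 eqC] leC].
have p2 : (2 <= 2)%N by [].
have L0 := lnp_gt0 _ p2.
set L := ln (2%:R : R) in L0.
set qs := expR (- (f xs * L)).
have qs0 : 0 < qs by apply: expR_gt0.
set a := 1 - expR (- qs).
have a0 : 0 < a by rewrite subr_gt0 expR_lt1 oppr_lt0.
set b := expR (- expR xs).
have b0 : 0 < b by apply: expR_gt0.
have Cs := Cge C0 f 2 xs p2 (f_ge1 _ xs0) (C0_pos _ xs0).
have key : forall xi, 0 < xi -> xi <= xs -> 2 * (a * b) * (2 * C0 xs) <= C0 xi.
  move=> xi xi0 xixs.
  have f1 := f_ge1 _ xi0.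
  have hq := qpf_bd _ _ _ p2 f1.
  have hC := leC _ xi0; rewrite -eqC in Cs.
  have hC' := le_trans Cs hC.
  move: hC'; rewrite /Cpxi.
  have := ln1B _ hq; move: hq; rewrite tE; last by rewrite qpf_bd.
  rewrite qpfE // -/L.
  set q := expR (- (f xi * L)) => /andP[q0 q2] /andP[y1 y2].
  have qq : qs <= q.
    by rewrite ler_expR lerN2 ler_pM2r // f_mono.
  have e1 : 1 <= expR xi by rewrite -expR0 ler_expR ltW.
  have e2 : expR xi <= expR xs by rewrite ler_expR.
  set y := ln (1 - q) in y1 y2 *.
  set t := expR (expR xi * y).
  have e0 : 0 <= expR xi by apply: expR_ge0.
  have tb : b <= t.
    rewrite ler_expR (le_trans _ (aux1 _ _ _ e0 y1 _)) ?lerN2 //.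
    exact: aux3.
  have ta : t <= expR (- qs).
    rewrite ler_expR; apply: aux2 => //.
      by rewrite (le_trans y2) // oppr_le0 ltW.
    by rewrite (le_trans y2) // lerN2.
  have d0 : 2 * (a * b) <= 2 * ((1 - t) * t).
    rewrite ler_pM2l //; apply: ler_pM; [exact: ltW| exact: ltW| |exact: tb].
    by rewrite /a lerD2l lerN2.
  have m0 : 0 < 2 * (a * b) by rewrite !mulr_gt0.
  have c0 := C0_pos _ xi0.
  by apply: aux4 => //; apply: ltW.
exists (Order.min (C0 xs) (2 * (a * b) * (2 * C0 xs))).
  by rewrite lt_min C0_pos //= !mulr_gt0 // C0_pos.
move=> xi xi0; case: (leP xi xs) => h.
  by rewrite ge_min key ?orbT.
by rewrite ge_min (C0_mono xs xi xs0 (ltW h)).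
Qed.

Lemma aux5 (F l x Lp e : R) : 0 < F -> 0 < x -> x <= F * Lp -> 0 < e ->
  `|0 - F * l / x| <= e -> l <= e * Lp.
Proof.
move=> F0 x0 xF e0; rewrite sub0r normrN => h.
have Lp0 : 0 < Lp.
  by rewrite -(pmulr_rgt0 _ F0) (lt_le_trans x0).
case: (leP l 0) => l0; first by rewrite (le_trans l0) // mulr_ge0 // ltW.
have h1 : F * l / x <= e by rewrite (le_trans (ler_norm _)).
rewrite ler_pdivrMr // in h1.
have h2 : F * l <= F * (e * Lp) by rewrite (le_trans h1) //; nra.
by rewrite ler_pM2l in h2.
Qed.

Lemma aux6 (M xi : R) p : expR M * 2 / ln 2 < p%:R -> ln 2 / 2 * p%:R <= expR xi -> M < xi.
Proof.
move=> hp hx; rewrite -ltr_expR (lt_le_trans _ hx) //.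
have l2 := ln2_gt0.
rewrite ltr_pdivrMr // in hp.
rewrite mulrAC ltr_pdivlMr //; lra.
Qed.

Lemma near_lnp (B : R) : \forall p \near \oo, B <= ln (p%:R : R).
Proof.
apply: filterS (nbhs_infty_ger (expR B)) => p hp.
by rewrite -[X in X <= _]expRK ler_ln // posrE ?expR_gt0 // (lt_le_trans (expR_gt0 B)).
Qed.

Lemma aux7 (x K Lp a be : R) (d : nat) : 1 <= x -> 0 < K -> 1 <= Lp -> 0 < a ->
  0 <= be < 1 -> a / (1 - be) <= d%:R -> x <= K * x `^ be * Lp ->
  x `^ a <= K `^ (a / (1 - be)) * Lp ^+ d.
Proof.
move=> x1 K0 L1 a0 /andP[be0 be1] rd hx.
have x0 : 0 < x by rewrite (lt_le_trans ltr01).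
have b1 : 0 < 1 - be by rewrite subr_gt0.
have xb0 : 0 < x `^ be by apply: powR_gt0.
have hx1 : x `^ (1 - be) <= K * Lp.
  have e : x = x `^ (1 - be) * x `^ be.
    by rewrite -powRD ?subrK ?powRr1 ?ltW // gt_eqF ?implybT.
  rewrite {1}e mulrAC in hx.
  by rewrite ler_pM2r in hx.
set r := a / (1 - be).
have r0 : 0 <= r by rewrite divr_ge0 // ltW.
have -> : a = (1 - be) * r by rewrite /r mulrC divfK // gt_eqF.
rewrite powRrM.
have hK : 0 <= K by exact: ltW.
have hL : 0 <= Lp by rewrite (le_trans ler01).
apply: (le_trans (ge0_ler_powR r0 _ _ hx1)).
- by rewrite nnegrE powR_ge0.
- by rewrite nnegrE mulr_ge0.
rewrite powRM // ler_pM2l ?powR_gt0 // -powR_mulrn //.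
exact: ler_powR.
Qed.
End H.

Theorem lemma2 (R : realType) (f C0 : R -> R) (Cmin : nat -> R)
  (f_ge1 : forall xi, 0 < xi -> 1 <= f xi)
  (f_mono : forall x y, 0 < x -> x <= y -> f x <= f y)
  (C0_pos : forall xi, 0 < xi -> 0 < C0 xi)
  (C0_mono : forall x y, 0 < x -> x <= y -> C0 x <= C0 y)
  (Cmin_def : forall p : nat, (2 <= p)%N -> is_Cmin C0 f p (Cmin p))
  (xi0_ex : \forall p \near \oo, exists2 xi0 : R, 0 < xi0 &
      xi0 = ln (- ln 2 / ln (1 - qpf f p xi0))) :
  ((f xi * ln (C0 xi) / xi @[xi --> +oo] --> 0) ->
     ln (Cmin p) / ln p%:R @[p --> \oo] --> 0)
  /\
  ((exists K' a : R, 0 < K' /\ 0 < a /\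
       \forall xi \near +oo, C0 xi <= K' * xi `^ a) ->
   (exists K beta : R, 0 < K /\ 0 <= beta < 1 /\
       \forall xi \near +oo, f xi <= K * xi `^ beta) ->
   exists (c : R) (d : nat), \forall p \near \oo, Cmin p <= c * (ln p%:R) ^+ d).
Proof.
have [c c0 hc] := C0_lb _ _ _ f_ge1 f_mono C0_pos C0_mono (Cmin_def 2 erefl).
have Cmin_lb : forall p, (2 <= p)%N -> 2 * c <= Cmin p.
  move=> p p2; have [[xs xs0 ->] _] := Cmin_def p p2.
  apply: le_trans (Cge C0 f p xs p2 (f_ge1 _ xs0) (C0_pos _ xs0)).
  by rewrite ler_pM2l // hc.
have Cmin_ub : forall p xi, (2 <= p)%N -> 0 < xi ->
    xi = ln (- ln 2 / ln (1 - qpf f p xi)) ->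
    [/\ Cmin p <= 2 * C0 xi, xi <= f xi * ln p%:R & ln 2 / 2 * p%:R <= expR xi].
  move=> p xi p2 xi0 hxi.
  have [hC h1 h2] := Cxi0 C0 f p xi p2 (f_ge1 _ xi0) hxi.
  split => //; rewrite -hC.
  by have [_ ->] := Cmin_def p p2.
split.
  move=> hlim; apply/cvgrPdist_le => e e0.
  have e20 : 0 < e / 2 by rewrite divr_gt0.
  have [M [Mr HM]] := (cvgrPdist_le _ _).1 hlim _ e20.
  near=> p.
  have p2 : (2 <= p)%N by near: p; exact: nbhs_infty_ge.
  have [xi xi0 hxi] : exists2 xi0 : R, 0 < xi0 &
      xi0 = ln (- ln 2 / ln (1 - qpf f p xi0)) by near: p; exact: xi0_ex.
  have [hC hle hexp] := Cmin_ub p xi p2 xi0 hxi.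
  have hp : expR M * 2 / ln 2 < p%:R by near: p; exact: nbhs_infty_gtr.
  have hL1 : 2 * ln 2 / e <= ln (p%:R : R) by near: p; exact: near_lnp.
  have hL2 : - ln (2 * c) / e <= ln (p%:R : R) by near: p; exact: near_lnp.
  have xiM : M < xi := aux6 M xi p hp hexp.
  have hM := HM _ xiM.
  have L0 := @lnp_gt0 R p p2.
  have F0 : 0 < f xi by rewrite (lt_le_trans ltr01) ?f_ge1.
  have hlC := aux5 _ _ _ _ _ F0 xi0 hle e20 hM.
  have Cm0 : 0 < Cmin p by rewrite (lt_le_trans _ (Cmin_lb p p2)) ?mulr_gt0.
  have C00 := C0_pos _ xi0.
  have up : ln (Cmin p) <= ln 2 + ln (C0 xi).
    by rewrite -lnM ?posrE // ler_ln ?posrE ?mulr_gt0.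
  have lo : ln (2 * c) <= ln (Cmin p).
    by rewrite ler_ln ?posrE ?mulr_gt0 ?Cmin_lb.
  rewrite ler_pdivrMr // in hL1.
  rewrite ler_pdivrMr // in hL2.
  rewrite sub0r normrN normrM normfV (gtr0_norm L0) ler_pdivrMr //.
  rewrite ler_norml; apply/andP; split; lra.
move=> [K' [a [K'0 [a0 HC]]]] [K [be [K0 [hbe Hf]]]].
have [M1 [M1r HM1]] := HC.
have [M2 [M2r HM2]] := Hf.
exists (2 * (K' * K `^ (a / (1 - be)))), (Num.truncn (a / (1 - be))).+1.
near=> p.
have p2 : (2 <= p)%N by near: p; exact: nbhs_infty_ge.
have [xi xi0 hxi] : exists2 xi0 : R, 0 < xi0 &
    xi0 = ln (- ln 2 / ln (1 - qpf f p xi0)) by near: p; exact: xi0_ex.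
have [hC hle hexp] := Cmin_ub p xi p2 xi0 hxi.
have hp1 : expR M1 * 2 / ln 2 < p%:R by near: p; exact: nbhs_infty_gtr.
have hp2 : expR M2 * 2 / ln 2 < p%:R by near: p; exact: nbhs_infty_gtr.
have hp3 : expR 1 * 2 / ln 2 < (p%:R : R) by near: p; exact: nbhs_infty_gtr.
have hL : 1 <= ln (p%:R : R) by near: p; exact: near_lnp.
have L0 := @lnp_gt0 R p p2.
have hfx := HM2 _ (aux6 M2 xi p hp2 hexp).
have hCx := HM1 _ (aux6 M1 xi p hp1 hexp).
have xi1 := aux6 1 xi p hp3 hexp.
have hxle : xi <= K * xi `^ be * ln (p%:R : R).
  exact: (le_trans hle (ler_wpM2r (ltW L0) hfx)).
have := aux7 _ _ _ _ _ _ (ltW xi1) K0 hL a0 hbe (ltW (truncnS_gt _)) hxle.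
move=> h7.
apply: (le_trans hC).
rewrite -mulrA ler_pM2l //.
apply: (le_trans hCx).
by rewrite -mulrA ler_pM2l.
Unshelve. all: by end_near.
Qed.
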